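(* Let $A$ be a finite-dimensional complex evolution algebra which is not a non-zero trivial evolution algebra, with natural basis $B=\{e_1,\dots,e_n\}$ and structure matrix $W=(\omega_{ij})_{i,j=1}^n$ (so $e_j^2=\sum_i\omega_{ij}e_i$). Let $a=\sum_{i=1}^n\alpha_ie_i$, $D_a=\mathrm{diag}(\alpha_1,\dots,\alpha_n)$ and $\lambda\in\mathbb{C}$. Then: (i) $\lambda\in\sigma_m^A(a)$ if and only if $\lambda=0$ or $\lambda$ is an eigenvalue of the matrix $WD_a$; (ii) $\lambda\in\sigma^A(a)$ if and only if $\lambda=0$ or the linear system $(WD_a-\lambda I_n)\beta=(\alpha_1,\dots,\alpha_n)^T$ has no solution $\beta\in\mathbb{C}^n$ (in which case $\lambda\in\sigma^A_m(a)$).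
   Context: An evolution algebra is an algebra with a basis $\{e_i\}$ (natural basis) with $e_ie_j=0$ for $i\neq j$; a non-zero trivial evolution algebra has a natural basis with $e_i^2=\omega_{ii}e_i$, $\omega_{ii}\neq0$ for all $i$. For a complex algebra $A$: if $A$ has a unit $e$ put $\tilde A=A$, else $\tilde A=A\oplus\mathbb{C}\mathbf1$ is the unitization with product $(a+\lambda\mathbf1)(b+\mu\mathbf1)=ab+\lambda b+\mu a+\lambda\mu\mathbf1$ and $e=\mathbf1$. $x\in\tilde A$ is invertible if it has a left and a right inverse, and m-invertible if $L_x(y)=xy$ and $R_x(y)=yx$ are bijective on $\tilde A$. $\sigma^A(a)=\{\lambda:a-\lambda e\text{ not invertible in }\tilde A\}$ and $\sigma^A_m(a)=\{\lambda:a-\lambda e\text{ not m-invertible in }\tilde A\}$. *)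

(* Defs.v *)
From HB Require Import structures.
From mathcomp Require Import all_boot all_order all_algebra.
Set Implicit Arguments. Unset Strict Implicit. Unset Printing Implicit Defensive.
Import GRing.Theory Num.Theory.
Local Open Scope ring_scope.

(* The evolution algebra A = F^n (column vectors = coordinates w.r.t. the
   natural basis e_1..e_n), structure matrix W: e_j^2 = sum_i W i j e_i,
   e_i e_j = 0 for i <> j. *)
Definition evmul (F : fieldType) (n : nat) (W : 'M[F]_n) (x y : 'cV[F]_n)
  : 'cV[F]_n := \col_i \sum_j W i j * x j 0 * y j 0.

Definition nonzero_trivial (F : fieldType) (n : nat) (W : 'M[F]_n) : Prop :=
  (0 < n)%N /\
  exists P : 'M[F]_n, P \in unitmx /\
    (forall k l : 'I_n, k != l -> evmul W (col k P) (col l P) = 0) /\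
    (forall k : 'I_n, exists c : F, c != 0 /\
        evmul W (col k P) (col k P) = c *: col k P).

Definition is_unit_of (T : Type) (mul : T -> T -> T) (e : T) : Prop :=
  forall x, mul e x = x /\ mul x e = x.

Definition invertible (T : Type) (mul : T -> T -> T) (e x : T) : Prop :=
  (exists y, mul x y = e) /\ (exists z, mul z x = e).

Definition m_invertible (T : Type) (mul : T -> T -> T) (e x : T) : Prop :=
  bijective (mul x) /\ bijective (fun y => mul y x).

(* unitization A (+) F 1 : (a + l 1)(b + m 1) = ab + l b + m a + l m 1 *)
Definition umul (F : fieldType) (n : nat) (W : 'M[F]_n)
  (x y : 'cV[F]_n * F) : 'cV[F]_n * F :=
  (evmul W x.1 y.1 + x.2 *: y.1 + y.2 *: x.1, x.2 * y.2).

(* spectrum w.r.t. an invertibility notion P: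
   if A has a unit e, tilde A = A and lam is in the spectrum iff a - lam e is
   not P-invertible in A; otherwise tilde A is the unitization, e = 1 = (0,1),
   and a - lam 1 = (a, -lam). *)
Definition spec_gen
  (P : forall T : Type, (T -> T -> T) -> T -> T -> Prop)
  (F : fieldType) (n : nat) (W : 'M[F]_n) (a : 'cV[F]_n) (lam : F) : Prop :=
  (exists e, is_unit_of (@evmul F n W) e /\
             ~ P _ (@evmul F n W) e (a - lam *: e)) \/
  ((~ exists e, is_unit_of (@evmul F n W) e) /\
   ~ P _ (@umul F n W) (0, 1) (a, - lam)).

Definition sigmaA (F : fieldType) (n : nat) (W : 'M[F]_n) a lam :=
  spec_gen invertible W a lam.
Definition sigmaA_m (F : fieldType) (n : nat) (W : 'M[F]_n) a lam :=
  spec_gen m_invertible W a lam.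

(* Main.v *)
Require Import Defs.
From HB Require Import structures.
From mathcomp Require Import all_boot all_order all_algebra.
From Corelib Require Import Setoid.
Set Implicit Arguments. Unset Strict Implicit. Unset Printing Implicit Defensive.
Import GRing.Theory Num.Theory.
Local Open Scope ring_scope.

Lemma eig_iff (F : fieldType) n (G : 'M[F]_n) lam :
  eigenvalue G lam = (G - lam%:M \notin unitmx).
Proof. by rewrite /eigenvalue /eigenspace kermx_eq0 row_free_unit. Qed.

Lemma evmulC (F : fieldType) n (W : 'M[F]_n) x y : evmul W x y = evmul W y x.
Proof. by apply/matrixP=> i j; rewrite !mxE; apply: eq_bigr=> k _; rewrite mulrAC. Qed.

Lemma evmulE (F : fieldType) n (W : 'M[F]_n) a b :
  evmul W a b = W *m diag_mx a^T *m b.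
Proof.
apply/matrixP=> i j; rewrite !mxE ord1; apply: eq_bigr=> k _.
by rewrite mul_mx_diag !mxE.
Qed.

Lemma no_unit (F : fieldType) n (W : 'M[F]_n) :
  (0 < n)%N -> ~ nonzero_trivial W -> ~ exists e, is_unit_of (evmul W) e.
Proof.
move=> n0 NT [e He]; apply: NT; split=> //.
have key i j : W i j * e j 0 = (i == j)%:R.
  move: (He (delta_mx j 0)) => [/matrixP /(_ i 0) + _].
  rewrite !mxE (bigD1 j) //= big1 ?addr0; last first.
    by move=> k /negbTE kj; rewrite !mxE kj mulr0.
  by rewrite !mxE !eqxx mulr1 andbT.
have ek j : e j 0 != 0.
  by apply/eqP=> h; have := key j j; rewrite h mulr0 eqxx => /eqP; rewrite eq_sym oner_eq0.
exists 1%:M; split; first exact: unitmx1.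
split.
  move=> k l kl; apply/matrixP=> i j; rewrite !mxE big1 // => m _.
  rewrite !col1 !mxE; case: (m =P k) => [->|_]; last by rewrite mulr0 ?mul0r.
  by rewrite (negbTE kl) mulr0.
move=> k; exists (W k k); split.
  by apply/eqP=> h; have := key k k; rewrite h mul0r eqxx => /eqP; rewrite eq_sym oner_eq0.
apply/matrixP=> i j; rewrite !col1 !mxE (bigD1 k) //= big1 ?addr0; last first.
  by move=> m /negbTE mk; rewrite !mxE mk /= mulr0.
rewrite !mxE !eqxx !mulr1 ord1 eqxx andbT.
case: (i =P k) => [->|/eqP ik]; first by rewrite mulr1.
rewrite mulr0; have := key i k; rewrite (negbTE ik) => /eqP.
by rewrite mulf_eq0 (negbTE (ek k)) orbF => /eqP.
Qed.

Section Main.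
Variables (F : fieldType) (n : nat) (W : 'M[F]_n) (a : 'cV[F]_n) (lam : F).
Let M := W *m diag_mx a^T - lam%:M.

Lemma umulE y : umul W (a, - lam) y = (M *m y.1 + y.2 *: a, - lam * y.2).
Proof.
rewrite /umul /= evmulE /M mulmxBl mul_scalar_mx scaleNr.
by congr (_, _); rewrite addrAC.
Qed.

Lemma umulC x y : umul W x y = umul W y x.
Proof. by rewrite /umul evmulC mulrC; congr (_, _); rewrite addrAC -addrA [_ + _ *: _]addrC addrA. Qed.

Lemma inv_iff : invertible (umul W) (0, 1) (a, - lam) <->
  lam != 0 /\ exists beta, M *m beta = a.
Proof.
split.
  case=> [[[b mu]]]; rewrite umulE /= => [[h1 h2]] _.
  have lam0 : lam != 0 by apply/eqP=> l0; move: h2; rewrite l0 oppr0 mul0r => /eqP; rewrite eq_sym oner_eq0.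
  have mu0 : mu != 0 by apply/eqP=> m0; move: h2; rewrite m0 mulr0 => /eqP; rewrite eq_sym oner_eq0.
  split=> //; exists ((- mu)^-1 *: b).
  rewrite -scalemxAr; move/eqP: h1; rewrite addr_eq0 => /eqP ->.
  by rewrite -scaleNr scalerA mulVf ?scale1r // oppr_eq0.
case=> l0 [beta hb].
have e : umul W (a, - lam) (lam^-1 *: beta, - lam^-1) = (0, 1).
  rewrite umulE /= -scalemxAr hb mulrN mulNr opprK divff // scaleNr.
  by rewrite subrr.
by split; [exists (lam^-1 *: beta, - lam^-1) | exists (lam^-1 *: beta, - lam^-1); rewrite umulC].
Qed.

Lemma minv_iff : m_invertible (umul W) (0, 1) (a, - lam) <->
  lam != 0 /\ M \in unitmx.
Proof.
have eqf : (fun y => umul W y (a, - lam)) =1 umul W (a, - lam).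
  by move=> y; rewrite umulC.
rewrite /m_invertible.
split.
  case=> [[g fg gf]] _.
  have lam0 : lam != 0.
    apply/eqP=> l0; move: (gf (0, 1)); rewrite umulE l0 oppr0 mul0r.
    by case=> _ /eqP; rewrite eq_sym oner_eq0.
  split=> //; apply/negPn/negP; rewrite -unitmx_tr unitmxE unitfE negbK => /det0P [v v0 vM].
  have : umul W (a, - lam) (v^T, 0) = umul W (a, - lam) (0, 0).
    by rewrite !umulE /= -[M]trmxK -trmx_mul vM !scale0r mulr0 mulmx0 trmx0.
  move/(can_inj fg) => [] /eqP; rewrite trmx_eq0; exact/negP.
case=> l0 Mu.
suff B : bijective (umul W (a, - lam)).
  split=> //; case: B => g fg gf; exists g => y /=; first by rewrite umulC fg.
  by rewrite umulC gf.
exists (fun z => (invmx M *m (z.1 - (z.2 / - lam) *: a), z.2 / - lam)).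
  case=> b mu; rewrite umulE /=.
  rewrite mulrC mulKf ?oppr_eq0 // addrK mulKmx //.
case=> c nu; rewrite umulE /= mulKVmx // subrK mulrC divfK ?oppr_eq0 //.
Qed.
End Main.

Lemma spec_iff (F : fieldType) n (W : 'M[F]_n) a lam P :
  ~ (exists e, is_unit_of (evmul W) e) ->
  spec_gen P W a lam <-> ~ P _ (umul W) (0,1) (a,-lam).
Proof.
move=> NU; split; first by case=> [[e [He _]]|[_ h]] //; exfalso; apply: NU; exists e.
by move=> h; right; split.
Qed.

Theorem proposition5p3 (F : numClosedFieldType) (n : nat) (W : 'M[F]_n)
  (a : 'cV[F]_n) (lam : F) :
  (0 < n)%N -> ~ nonzero_trivial W ->
  (sigmaA_m W a lam <-> lam = 0 \/ eigenvalue (W *m diag_mx a^T) lam) /\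
  (sigmaA W a lam <->
     lam = 0 \/ ~ exists beta : 'cV[F]_n,
                    (W *m diag_mx a^T - lam%:M) *m beta = a) /\
  (sigmaA W a lam -> sigmaA_m W a lam).
Proof.
move=> n0 NT; have NU := no_unit n0 NT.
rewrite /sigmaA_m /sigmaA (spec_iff _ _ m_invertible NU) (spec_iff _ _ invertible NU) minv_iff inv_iff eig_iff.
split; last split.
- have [->|l0] := eqVneq lam 0; first by split=> [_|_ []]; [left|].
  split=> [h|[e|nu] [_ u]]; [right; apply/negP=> u; exact: h | by move/eqP: l0 | by rewrite u in nu].
- have [->|l0] := eqVneq lam 0; first by split=> [_|_ []]; [left|].
  split=> [h|[e|nu] [_ u]]; [by right=> ex; exact: h | by move/eqP: l0 | exact: nu].
- move=> h [l0 Mu]; apply: h; split=> //.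
  by exists (invmx (W *m diag_mx a^T - lam%:M) *m a); rewrite mulKVmx.
Qed.
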